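(* Let $w\in\{0,1\}^*$ be a $\frac{7}{3}$-power-free word with $|w|\geq 52$. Then $w$ contains both $\mu^3(0)=01101001$ and $\mu^3(1)=10010110$ as subwords.
   Context: $\mu$ is the Thue–Morse morphism on $\{0,1\}^*$, defined by $\mu(0)=01$, $\mu(1)=10$. A word $w'$ is a subword of $w$ if $w=uw'v$ for some words $u,v$. For a rational $\alpha\ge 1$, an $\alpha$-power is a word of the form $x^nx'$ with $x$ a nonempty word, $x'$ a prefix of $x$, $n$ a nonnegative integer and $n+|x'|/|x|=\alpha$. A word is $\alpha$-power-free if none of its subwords is a $\beta$-power for any rational $\beta\geq\alpha$. *)

(* Defs.v *)
From mathcomp Require Import all_boot all_order all_algebra.
Set Implicit Arguments. Unset Strict Implicit. Unset Printing Implicit Defensive.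
Import GRing.Theory Num.Theory.

(* Binary words: letter 0 is [false], letter 1 is [true]. *)
Definition word := seq bool.

Definition mu_letter (b : bool) : word := [:: b; ~~ b].
Definition mu (w : word) : word := flatten (map mu_letter w).

Definition subword (w' w : word) : Prop := exists u v, w = u ++ w' ++ v.

Definition is_power (alpha : rat) (y : word) : Prop :=
  exists (x x' : word) (n : nat),
    [/\ x != [::], prefix x' x,
        y = flatten (nseq n x) ++ x' &
        (n%:R + (size x')%:R / (size x)%:R = alpha)%R].

Definition power_free (alpha : rat) (w : word) : Prop :=
  forall (y : word) (beta : rat), subword y w -> (alpha <= beta)%R -> ~ is_power beta y.

(* Main.v *)
Require Import Defs.
From mathcomp Require Import all_boot all_order all_algebra.
From mathcomp Require Import zify.
Import Order.TTheory GRing.Theory Num.Theory.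

Lemma period_decomp p : 0 < p -> forall y : word, drop p y = take (size y - p) y ->
  p <= size y ->
  y = flatten (nseq (size y %/ p) (take p y)) ++ take (size y %% p) y.
Proof.
move=> p0 y; have [n] := ubnP (size y); elim: n y => // n IH y Hs Hper Hpy.
set z := drop p y.
have Hsz : size y = size z + p by rewrite /z size_drop subnK.
rewrite Hsz divnDr ?dvdnn // divnn p0 addn1 /= modnDr -catA.
rewrite -{1}(cat_take_drop p y); congr (_ ++ _); rewrite -/z.
have Hz : z = take (size z) y by rewrite /z size_drop; exact: Hper.
case: (ltnP (size z) p) => Hzp.
  by rewrite divn_small // modn_small //= -Hz.
have Hzper : drop p z = take (size z - p) z.
  have e: drop p z = drop p (take (size z - p + p) y) by rewrite subnK // -Hz.
  by rewrite e -take_drop.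
have Hlt : size z < n by rewrite -ltnS; apply: leq_trans Hs; rewrite Hsz -addn1 leq_add2l.
have := IH z Hlt Hzper Hzp.
have -> : take p z = take p y by rewrite Hz take_takel.
have -> : take (size z %% p) z = take (size z %% p) y by rewrite {2}Hz take_takel // leq_mod.
by [].
Qed.

Lemma power_of_period (y : word) p : 0 < p -> p <= size y ->
  drop p y = take (size y - p) y -> is_power ((size y)%:R / p%:R)%R y.
Proof.
move=> p0 Hpy Hper.
exists (take p y), (take (size y %% p) y), (size y %/ p).
have Hsx : size (take p y) = p by rewrite size_takel.
have Hsx' : size (take (size y %% p) y) = size y %% p by rewrite size_takel // leq_mod.
split.
- by rewrite -size_eq0 Hsx -lt0n.
- by rewrite -(take_takel _ (ltnW (ltn_pmod _ p0))) prefix_take.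
- exact: period_decomp.
- rewrite Hsx Hsx' {3}(divn_eq (size y) p) natrD natrM mulrDl mulfK //.
  by rewrite pnatr_eq0 -lt0n.
Qed.

Lemma ratle p L : 0 < p -> 7 * p <= 3 * L -> (7%:Q / 3%:Q <= L%:R / p%:R)%R.
Proof.
move=> p0 H.
rewrite (@ler_pdivlMr _ p%:R) ?ltr0n // mulrAC ler_pdivrMr ?ltr0n //.
have e7 : (7%:~R : rat) = (7%:R)%R by [].
have e3 : (3%:~R : rat) = (3%:R)%R by [].
by rewrite e7 e3 -!natrM ler_nat (mulnC L).
Qed.

Definition table : seq (nat * nat) := [:: (1, 2); (2, 3); (3, 4); (4, 6); (5, 7); (6, 8); (7, 10); (8, 11); (9, 12); (10, 14); (11, 15); (12, 16); (13, 18); (14, 19); (15, 20); (16, 22); (17, 23); (18, 24); (19, 26); (20, 27); (21, 28); (22, 30)].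
Definition sbad (v : word) : bool :=
  let s := size v in
  has (fun pk => let: (p, k) := pk in (p + k <= s) && (take k (drop (s - (p + k)) v) == drop (s - k) v)) table.
Fixpoint enum_good n : seq word := if n is n'.+1 then
  flatten [seq [seq rcons u b | b <- [:: false; true] & ~~ sbad (rcons u b)] | u <- enum_good n'] else [:: [::]].
Definition target := all (fun u => infix (mu (mu (mu [:: false]))) u && infix (mu (mu (mu [:: true]))) u) (enum_good 52).
Lemma target_ok : target. Proof. vm_compute. reflexivity. Qed.

Lemma table_ok : all (fun pk => (0 < pk.1) && (4 * pk.1 <= 3 * pk.2)) table.
Proof. by []. Qed.

Lemma sbad_power v : sbad v -> exists y beta, [/\ subword y v, (7%:Q / 3%:Q <= beta)%R & is_power beta y].
Proof.
case/hasP=> [[p k]] Hin /andP[Hs /eqP He].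
have /andP[/= p0 Hpk] := allP table_ok _ Hin.
set m := size v - (p + k).
exists (drop m v), ((size (drop m v))%:R / p%:R)%R.
have Hsz : size (drop m v) = p + k by rewrite size_drop /m subKn.
split.
- by exists (take m v), [::]; rewrite cats0 cat_take_drop.
- by apply: ratle => //; rewrite Hsz; lia.
- apply: power_of_period => //; first by rewrite Hsz leq_addr.
  rewrite Hsz addKn /m He drop_drop; congr (drop _ _); lia.
Qed.

Lemma enum_complete (v : word) : (forall a c, v = a ++ c -> ~~ sbad a) -> v \in enum_good (size v).
Proof.
elim/last_ind: v => [|u b IH] H; first by rewrite inE.
rewrite size_rcons /=.
apply/flattenP; exists [seq rcons u b0 | b0 <- [:: false; true] & ~~ sbad (rcons u b0)].
  apply: map_f; apply: IH => a c e; apply: (H a (rcons c b)).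
  by rewrite e rcons_cat.
apply: map_f; rewrite mem_filter (H _ [::]) ?cats0 //.
by case: (b) => /=; rewrite !inE ?eqxx ?orbT.
Qed.

Lemma subword_trans (x y z : word) : subword x y -> subword y z -> subword x z.
Proof.
move=> [a [b ->]] [c [d ->]]; exists (c ++ a), (b ++ d).
by rewrite -!catA.
Qed.

Theorem lemma3 (w : seq bool) :
  power_free (7%:Q / 3%:Q)%R w -> 52 <= size w ->
  subword (mu (mu (mu [:: false]))) w /\ subword (mu (mu (mu [:: true]))) w.
Proof.
move=> Hpf Hsz.
set v := take 52 w.
have Hv : subword v w by exists [::], (drop 52 w); rewrite cat_take_drop.
have Hsv : size v = 52 by rewrite size_takel.
have Hin : v \in enum_good 52.
  rewrite -Hsv; apply: enum_complete => a c e; apply/negP => /sbad_power.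
  move=> [y [beta [Hy Hb Hp]]].
  apply: (Hpf y beta _ Hb Hp).
  apply: subword_trans Hy _; apply: subword_trans Hv.
  by exists [::], c.
have /andP[H0 H1] := allP target_ok v Hin.
split; apply: subword_trans Hv.
  by case/infixP: H0 => s [s' ->]; exists s, s'.
by case/infixP: H1 => s [s' ->]; exists s, s'.
Qed.
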